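(* Let $(f,p)$ be a DSIC one-player mechanism with quasi-linear additive utilities on $m$ items, and let $G_f$ be its allocation network. Let $C=(a^{(1)},\dots,a^{(k)}=a^{(1)})$ be a cycle in $G_f$ such that $Q_{a^{(j)}}\cap Q_{a^{(j+1)}}\neq\emptyset$ for every $j\in[k-1]$. Then the length $\sum_{j=1}^{k-1}\ell(a^{(j)},a^{(j+1)})$ of $C$ equals $0$.
   Context: Types $\theta\in\Theta\subseteq\mathbb R^m$, allocations $a\in\{0,1\}^m$, allocation function $f:\Theta\to\{0,1\}^m$, payment $p:\Theta\to\mathbb R$; DSIC means $\theta\cdot f(\theta)-p(\theta)\ge\theta\cdot f(\theta')-p(\theta')$ for all $\theta,\theta'\in\Theta$. $R_a=\{\theta\in\Theta:f(\theta)=a\}$ and $Q_a=\mathrm{cl}(R_a)$. The allocation network $G_f$ is the complete directed graph on node set $\{0,1\}^m$ with arc lengths $\ell(a,a')=\inf_{\theta\in R_{a'}}\{\theta\cdot a'-\theta\cdot a\}$. *)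

(* Defs.v *)
From HB Require Import structures.
From mathcomp Require Import all_boot all_order all_algebra.
From mathcomp Require Import all_classical all_reals all_analysis.
Set Implicit Arguments. Unset Strict Implicit. Unset Printing Implicit Defensive.
Import Order.TTheory GRing.Theory Num.Theory.
Import numFieldNormedType.Exports.
Local Open Scope classical_set_scope.
Local Open Scope ring_scope.

Definition alloc (m : nat) := {ffun 'I_m -> bool}.

Definition dotA (R : realType) (m : nat) (th : 'rV[R]_m) (a : alloc m) : R :=
  \sum_(i < m) th 0 i * (a i)%:R.

Definition DSIC (R : realType) (m : nat) (Theta : set 'rV[R]_m)
    (f : 'rV[R]_m -> alloc m) (p : 'rV[R]_m -> R) : Prop :=
  forall th th', Theta th -> Theta th' ->
    dotA th (f th') - p th' <= dotA th (f th) - p th.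

Definition region (R : realType) (m : nat) (Theta : set 'rV[R]_m)
    (f : 'rV[R]_m -> alloc m) (a : alloc m) : set 'rV[R]_m :=
  [set th | Theta th /\ f th = a].

Definition cregion (R : realType) (m : nat) (Theta : set 'rV[R]_m)
    (f : 'rV[R]_m -> alloc m) (a : alloc m) : set 'rV[R]_m :=
  closure (region Theta f a).

Definition arc_len (R : realType) (m : nat) (Theta : set 'rV[R]_m)
    (f : 'rV[R]_m -> alloc m) (a a' : alloc m) : \bar R :=
  ereal_inf [set (dotA th a' - dotA th a)%:E | th in region Theta f a'].

(* Main.v *)
Require Import Defs.
From HB Require Import structures.
From mathcomp Require Import all_boot all_order all_algebra.
From mathcomp Require Import all_classical all_reals all_analysis.
From mathcomp Require Import lra.
Import Order.TTheory GRing.Theory Num.Theory.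
Import numFieldNormedType.Exports.
Local Open Scope classical_set_scope.
Local Open Scope ring_scope.

Lemma dotA_cont (R : realType) (m : nat) (a : alloc m) :
  continuous (fun th : 'rV[R]_m => dotA th a).
Proof.
rewrite /dotA.
suff H : forall s : seq 'I_m,
    continuous (fun th : 'rV[R]_m => \sum_(i <- s) th 0 i * (a i)%:R).
  exact: H.
elim=> [|i s IH].
  rewrite (_ : (fun _ => _) = fun _ => 0); last by apply: funext => th; rewrite big_nil.
  exact: cst_continuous.
rewrite (_ : (fun _ => _) = (fun th : 'rV[R]_m => th 0 i * (a i)%:R) +
   (fun th : 'rV[R]_m => \sum_(i <- s) th 0 i * (a i)%:R)); last first.
  by apply: funext => th; rewrite big_cons.
move=> x; apply: continuousD; last exact: IH.
apply: (@continuousM _ _ (fun th : 'rV[R]_m => th 0 i) (fun _ => (a i)%:R)).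
  exact: coord_continuous.
exact: cst_continuous.
Qed.

Lemma g_cont (R : realType) (m : nat) (a b : alloc m) :
  continuous (fun th : 'rV[R]_m => dotA th b - dotA th a).
Proof.
move=> x; have := cvgB (@dotA_cont R m b x) (@dotA_cont R m a x); exact.
Qed.

Lemma arc_len_eq (R : realType) (m : nat) (Theta : set 'rV[R]_m)
    (f : 'rV[R]_m -> alloc m) (p : 'rV[R]_m -> R) (a b : alloc m) t t' :
  DSIC Theta f p -> region Theta f a t -> region Theta f b t' ->
  cregion Theta f a `&` cregion Theta f b !=set0 ->
  arc_len Theta f a b = (p t' - p t)%:E.
Proof.
move=> D [Tt ft] [Tt' ft'] [ts [cla clb]].
set g := fun th : 'rV[R]_m => dotA th b - dotA th a.
set c := p t' - p t.
have lb : forall th, region Theta f b th -> c <= g th.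
  move=> th [Tth fth].
  have := D th t Tth Tt; rewrite ft fth.
  have <- : p t' = p th.
    apply/le_anti/andP; split.
      by have := D t' th Tt' Tth; rewrite fth ft' => h; lra.
    by have := D th t' Tth Tt'; rewrite fth ft' => h; lra.
  rewrite /g /c => H; lra.
have ub : forall th, region Theta f a th -> g th <= c.
  move=> th [Tth fth].
  have := D th t' Tth Tt'; rewrite ft' fth.
  have <- : p t = p th.
    apply/le_anti/andP; split.
      by have := D t th Tt Tth; rewrite fth ft => h; lra.
    by have := D th t Tth Tt; rewrite fth ft => h; lra.
  rewrite /g /c => H; lra.
have gts : g ts <= c.
  rewrite leNgt; apply/negP => hlt.
  have nb : nbhs ts (g @^-1` [set y | c < y]).
    apply: (@g_cont R m a b ts); apply: open_nbhs_nbhs; split; [exact: open_gt | exact: hlt].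
  have [nu [rnu hnu]] := cla _ nb.
  by have := ub nu rnu; rewrite leNgt hnu.
apply/le_anti/andP; split.
  apply/lee_addgt0Pr => e e0.
  have nb : nbhs ts (g @^-1` [set y | y < c + e]).
    apply: (@g_cont R m a b ts); apply: open_nbhs_nbhs; split; [exact: open_lt|].
    rewrite /=; apply: (le_lt_trans gts); rewrite ltrDl //.
  have [th [rth hth]] := clb _ nb.
  apply: le_trans (ereal_inf_lbound _) _; first by exists th.
  by rewrite -EFinD lee_fin ltW.
apply: le_ereal_inf_tmp => _ [th hth <-]; rewrite lee_fin; exact: lb.
Qed.

Theorem proposition3p4 (R : realType) (m : nat) (Theta : set 'rV[R]_m)
    (f : 'rV[R]_m -> alloc m) (p : 'rV[R]_m -> R)
    (k : nat) (a : nat -> alloc m) :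
  DSIC Theta f p ->
  a k.-1 = a 0%N ->
  (forall j, (j < k.-1)%N ->
     cregion Theta f (a j) `&` cregion Theta f (a j.+1) !=set0) ->
  (\sum_(j < k.-1) arc_len Theta f (a j) (a j.+1))%E = 0%E.
Proof.
move=> D ak H.
pose q := fun b : alloc m => p (xget 0 (region Theta f b)).
have ne : forall b, cregion Theta f b !=set0 -> region Theta f b !=set0.
  move=> b [x cx]; have [y [ry _]] := cx setT filterT; by exists y.
have E : forall j : 'I_k.-1,
    arc_len Theta f (a j) (a j.+1) = (q (a j.+1) - q (a j))%:E.
  move=> j; have [x [c1 c2]] := H j (ltn_ord j).
  apply: (@arc_len_eq R m Theta f p _ _ (xget 0 (region Theta f (a j))) (xget 0 (region Theta f (a j.+1))) D).
  - by apply: xgetPex; apply: ne; exists x.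
  - by apply: xgetPex; apply: ne; exists x.
  - by exists x.
under eq_bigr => j _ do rewrite E.
rewrite sumEFin -(big_mkord xpredT (fun j => q (a j.+1) - q (a j))).
by rewrite telescope_sumr // ak subrr.
Qed.
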